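(* Let $V$ be a real Banach space and $X\subseteq V$ a convex subspace. Then $X$ has the homotopy fixed point property if and only if $X$ is a singleton.
   Context: A topological space $X$ has the homotopy fixed point property if for every continuous map $f\colon I\times X\to X$, where $I=[0,1]$, there exists a continuous map $p\colon I\to X$ with $f(t,p(t))=p(t)$ for all $t\in I$. *)

(* Defs.v *)
From HB Require Import structures.
From mathcomp Require Import all_boot all_order all_algebra.
From mathcomp Require Import all_classical all_reals all_analysis.
Set Implicit Arguments. Unset Strict Implicit. Unset Printing Implicit Defensive.
Import Order.TTheory GRing.Theory Num.Theory.
Import numFieldNormedType.Exports.
Local Open Scope classical_set_scope.
Local Open Scope ring_scope.

Definition unit_itv (R : realType) : set R := [set` `[(0:R), 1]].
Arguments unit_itv R : clear implicits.

(* Homotopy fixed point property of the subspace A of a topological space T: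
   every continuous map f : I x A -> A (given as a function on R x T whose
   restriction to I x A is continuous, for the subspace topology, and takes
   values in A) admits a continuous p : I -> A with f(t, p t) = p t on I. *)
Definition homotopy_fpp (R : realType) (T : topologicalType) (A : set T) : Prop :=
  forall f : R -> T -> T,
    {within unit_itv R `*` A, continuous (fun q : R * T => f q.1 q.2)} ->
    (forall t x, unit_itv R t -> A x -> A (f t x)) ->
    exists p : R -> T,
      [/\ {within unit_itv R, continuous p},
          (forall t, unit_itv R t -> A (p t)) &
          (forall t, unit_itv R t -> f t (p t) = p t)].

(* Main.v *)
Require Import Defs.
From HB Require Import structures.
From mathcomp Require Import all_boot all_order all_algebra.
From mathcomp Require Import all_classical all_reals all_analysis.
From mathcomp Require Import lra.
Import Order.TTheory GRing.Theory Num.Theory.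
Import numFieldNormedType.Exports.
Local Open Scope classical_set_scope.
Local Open Scope ring_scope.

Definition clamp (R : realType) (v : R) : R := Num.min 1 (Num.max 0 v).
Arguments clamp {R}.

Lemma clamp_cases (R : realType) (v : R) :
  [\/ v <= 0 /\ clamp v = 0, 1 <= v /\ clamp v = 1 | 0 <= v <= 1 /\ clamp v = v].
Proof.
rewrite /clamp maxEle minEle.
have [h0|h0] := leP 0 v.
  have [h1|h1] := leP 1 v.
    by apply: Or32; split.
  by apply: Or33; split => //; apply/andP; split => //; exact: ltW.
rewrite ler10; apply: Or31; split => //; exact: ltW.
Qed.

Lemma clamp01 (R : realType) (v : R) : 0 <= clamp v <= 1.
Proof. by case: (clamp_cases _ v) => [[_ ->]|[_ ->]|[h ->]] //; rewrite ?ler01 ?lexx. Qed.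

Lemma clamp_fix_lt (R : realType) (u t : R) : 0 <= u <= 1 -> t < 2^-1 ->
  clamp (u + t - 2^-1) = u -> u = 0.
Proof.
move=> /andP[u0 u1] ht.
case: (clamp_cases _ (u + t - 2^-1)) => [[_ ->]|[h ->]|[_ ->]] // e.
- lra.
- lra.
Qed.

Lemma clamp_fix_gt (R : realType) (u t : R) : 0 <= u <= 1 -> 2^-1 < t ->
  clamp (u + t - 2^-1) = u -> u = 1.
Proof.
move=> /andP[u0 u1] ht.
case: (clamp_cases _ (u + t - 2^-1)) => [[h ->]|[_ ->]|[_ ->]] // e.
- lra.
- lra.
Qed.

Lemma clamp_cont (R : realType) (T : topologicalType) (g : T -> R) :
  continuous g -> continuous (fun x => clamp (g x)).
Proof.
move=> gc.
have -> : (fun x => clamp (g x)) = (fun=> 1) \min ((fun=> 0) \max g) by [].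
apply: min_fun_continuous; first exact: cst_continuous.
apply: max_fun_continuous => //; exact: cst_continuous.
Qed.


Lemma itv_contra (R : realType) (q : R -> R) : {within `[0, 1], continuous q} ->
  (forall t, 0 <= t -> t < 2^-1 -> q t = 0) ->
  (forall t, 2^-1 < t -> t <= 1 -> q t = 1) -> False.
Proof.
move=> qc q0 q1.
have sub : forall a b : R, 0 <= a -> b <= 1 -> [set` `[a, b]] `<=` [set` `[0, 1]].
  move=> a b a0 b1 x /=; rewrite !in_itv /= => /andP[h1 h2].
  apply/andP; split; lra.
have qa : q (4^-1) = 0 by apply: q0; lra.
have qb : q (3 / 4) = 1 by apply: q1; lra.
have l1 : (4^-1 : R) <= 3/4 by lra.
have s1 := continuous_subspaceW (sub (4^-1) (3/4) ltac:(lra) ltac:(lra)) qc.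
have hv : Num.min (q 4^-1) (q (3/4)) <= 2^-1 <= Num.max (q 4^-1) (q (3/4)).
  rewrite qa qb minEle maxEle ler01; apply/andP; split; lra.
have [c] := IVT l1 s1 hv.
rewrite in_itv /= => /andP[c1 c2] qc2.
have ec : c = 2^-1.
  have [h|h|h] := ltgtP c (2^-1) => //.
  - by move: qc2; rewrite q0 //; lra.
  - by move: qc2; rewrite q1 //; lra.
subst c.
have l2 : (4^-1 : R) <= 2^-1 by lra.
have s2 := continuous_subspaceW (sub (4^-1) (2^-1) ltac:(lra) ltac:(lra)) qc.
have hv2 : Num.min (q 4^-1) (q 2^-1) <= 4^-1 <= Num.max (q 4^-1) (q 2^-1).
  rewrite qa qc2 minEle maxEle.
  have -> : ((0:R) <= 2^-1) = true by apply/idP; lra.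
  apply/andP; split; lra.
have [d] := IVT l2 s2 hv2.
rewrite in_itv /= => /andP[d1 d2] qd.
have [h|h|h] := ltgtP d (2^-1).
- by move: qd; rewrite q0 //; lra.
- lra.
- by move: qd; rewrite h qc2; lra.
Qed.

Lemma fstc (X Y : topologicalType) : continuous (@fst X Y).
Proof. move=> q; exact: cvg_fst. Qed.
Lemma sndc (X Y : topologicalType) : continuous (@snd X Y).
Proof. move=> q; exact: cvg_snd. Qed.

Lemma no_hfpp (R : realType) (V : normedModType R) (X : set V) (a b : V) :
  @convex_set R V X -> X a -> X b -> a != b -> ~ @homotopy_fpp R V X.
Proof.
move=> cX Xa Xb ab hf.
pose dd (x : V) := `|x - a| + `|x - b|.
have dpos x : 0 < dd x.
  rewrite lt_neqAle addr_ge0 // andbT eq_sym paddr_eq0 //.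
  apply/negP => /andP[]; rewrite !normr_eq0 !subr_eq0 => /eqP -> e.
  by rewrite e in ab.
pose r (x : V) := `|x - a| / dd x.
have r01 x : 0 <= r x <= 1.
  rewrite divr_ge0 ?addr_ge0 //= ler_pdivrMr // mul1r lerDl //.
pose s (u : R) := u *: b + (1 - u) *: a.
have sX u : 0 <= u -> u <= 1 -> X (s u).
  move=> u0 u1; have := cX b a (Itv01 u0 u1) (mem_set Xb) (mem_set Xa).
  by rewrite inE.
have rs u : 0 <= u -> u <= 1 -> r (s u) = u.
  move=> u0 u1.
  have e1 : s u - a = u *: (b - a).
    by rewrite /s scalerBr scalerBl scale1r [a - _]addrC addrA addrK.
  have e2 : s u - b = (1 - u) *: (a - b).
    by rewrite /s !scalerBr !scalerBl !scale1r opprB [RHS]addrC addrAC.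
  have nz : `|b - a| != 0 by rewrite normr_eq0 subr_eq0 eq_sym.
  rewrite /r /dd e1 e2 !normrZ (ger0_norm u0) ger0_norm ?subr_ge0 //.
  by rewrite [`|a - b|]distrC -mulrDl [u + _]addrC subrK mul1r mulfK.
have nc (c : V) : continuous (fun x : V => `|x - c|).
  move=> x; apply: (continuous_comp (f := fun x : V => x - c)) ; last exact: norm_continuous.
  by apply: continuousB => //; exact: cst_continuous.
have rc : continuous r.
  move=> x; apply: (@continuousM _ _ (fun x => `|x - a|) (fun x => (dd x)^-1)); first exact: nc.
  apply: continuousV; first by rewrite gt_eqF.
  by apply: (@continuousD _ _ _ (fun x => `|x - a|) (fun x => `|x - b|)); exact: nc.
pose f (t : R) (x : V) := s (clamp (r x + t - 2^-1)).
have fc : continuous (fun q : R * V => f q.1 q.2).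
  have gc : continuous (fun q : R * V => clamp (r q.2 + q.1 - 2^-1)).
    apply: clamp_cont => q.
    apply: (@continuousB _ _ _ (fun q : R * V => r q.2 + q.1) (fun=> 2^-1)); last exact: cst_continuous.
    apply: (@continuousD _ _ _ (fun q : R * V => r q.2) (fun q : R * V => q.1)); last exact: fstc.
    apply: (continuous_comp (f := snd)); [exact: sndc | exact: rc].
  move=> q; rewrite /f /s.
  apply: (@continuousD _ _ _ (fun q : R * V => clamp (r q.2 + q.1 - 2^-1) *: b)
            (fun q : R * V => (1 - clamp (r q.2 + q.1 - 2^-1)) *: a)).
    by apply: continuousZr_tmp; exact: gc.
  apply: continuousZr_tmp.
  have := continuousB (@cst_continuous (R * V)%type R 1 q) (gc q).
  exact.
have fA : forall t x, unit_itv R t -> X x -> X (f t x).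
  move=> t x _ _; case/andP: (clamp01 _ (r x + t - 2^-1)) => h0 h1; exact: sX.
have [p [pc pX pf]] := hf f (continuous_subspaceT fc) fA.
pose q t := r (p t).
have qc : {within `[0, 1], continuous q}.
  have pc' : {within [set` `[(0:R), 1]], continuous p} := pc.
  move=> t; exact: (continuous_comp (pc' t) (rc (p t))).
have inI t : 0 <= t -> t <= 1 -> unit_itv R t.
  by move=> t0 t1; rewrite /unit_itv /= in_itv /=; apply/andP.
have fx t : unit_itv R t -> clamp (q t + t - 2^-1) = q t.
  move=> ht; rewrite /q -{2}(pf t ht) /f.
  case/andP: (clamp01 _ (r (p t) + t - 2^-1)) => h0 h1.
  by rewrite rs.
apply: (@itv_contra R q qc).
  move=> t t0 t1; apply: (@clamp_fix_lt R _ t (r01 _) t1); apply: fx; apply: inI => //; lra.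
move=> t t0 t1; apply: (@clamp_fix_gt R _ t (r01 _) t0); apply: fx; apply: inI => //; lra.
Qed.

Theorem theorem4p5 (R : realType) (V : completeNormedModType R) (X : set V) :
  @convex_set R V X ->
  (@homotopy_fpp R V X <-> exists x : V, X = [set x]).
Proof.
move=> cX; split.
- move=> hf.
  have [x0 Xx0] : exists x, X x.
    have sc : {within unit_itv R `*` X, continuous (fun q : R * V => q.2)}.
      apply: continuous_subspaceT; exact: sndc.
    have [p [_ pX _]] := hf (fun _ x => x) sc (fun t x _ Xx => Xx).
    exists (p 0); apply: pX; rewrite /unit_itv /= in_itv /= lexx ler01.
    done.
  exists x0; apply/seteqP; split => y; last by move=> /= ->.
  move=> Xy /=; have [//|ne] := eqVneq y x0.
  by exfalso; exact: (@no_hfpp R V X y x0 cX Xy Xx0 ne hf).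
- case=> x -> f fc fA; exists (fun=> x); split.
  + by apply: continuous_subspaceT; exact: cst_continuous.
  + by [].
  + move=> t ht; exact: (fA t x ht (erefl x)).
Qed.
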